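(* Let $K\in{\rm Alg}(V)$ be a unital commutative associative $F$-algebra and let $f,g\in{\rm Gl}(V)$. Write $L(x)$ for left multiplication by $x$ in $K$. The following are equivalent: (i) $K^{(f,g)}$ is a unital algebra; (ii) there exists $w\in K^\times$ with $K^{(f,g)}=K^{(w)}$; (iii) $K^{(f,g)}\cong K$. Moreover, in this case $w$ is uniquely determined, $w^{-1}$ is the unit element of $K^{(f,g)}$, and there exist $u,v\in K$ with $w=uv$, $f=L(u)$ and $g=L(v)$. Finally, an $F$-linear map $\varphi:K^{(f,g)}\to K$ is an algebra isomorphism if and only if $\varphi=\sigma\circ L(w)$ for some $\sigma\in{\rm Aut}_F(K)$.
   Context: $F$ is a field and $V$ is a finite-dimensional $F$-vector space. ${\rm Alg}(V)$ denotes the set of $F$-bilinear multiplications on $V$; $xAy$ denotes the product of $x,y$ in $A\in{\rm Alg}(V)$. For $f,g\in{\rm End}_F(V)$ the principal Albert homotope $A^{(f,g)}$ is $V$ with product $xA^{(f,g)}y=f(x)A\,g(y)$. For $w\in K^\times$ (the invertible elements of $K$), the Jordan isotope $K^{(w)}\in{\rm Alg}(V)$ is defined by $xK^{(w)}y=xwy$. *)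

(* Defs.v *)
From HB Require Import structures.
From mathcomp Require Import all_boot all_order all_algebra.
Set Implicit Arguments. Unset Strict Implicit. Unset Printing Implicit Defensive.
Import GRing.Theory.
Local Open Scope ring_scope.

Section Defs.
Variables (F : fieldType) (V : vectType F).

(* An element of Alg(V): an F-bilinear multiplication on V. *)
Definition is_bilinear (m : V -> V -> V) : Prop :=
  (forall x, linear (m x)) /\ (forall y, linear (fun x => m x y)).

Definition is_unit_elt (m : V -> V -> V) (e : V) : Prop :=
  forall x, m e x = x /\ m x e = x.

Definition unital (m : V -> V -> V) : Prop := exists e, is_unit_elt m e.

Definition commutative_alg (m : V -> V -> V) : Prop := forall x y, m x y = m y x.

Definition associative_alg (m : V -> V -> V) : Prop :=
  forall x y z, m (m x y) z = m x (m y z).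

Definition invertible_elt (m : V -> V -> V) (w : V) : Prop :=
  exists e w', [/\ is_unit_elt m e, m w w' = e & m w' w = e].

Definition homotope (m : V -> V -> V) (f g : V -> V) : V -> V -> V :=
  fun x y => m (f x) (g y).

Definition isotope (m : V -> V -> V) (w : V) : V -> V -> V :=
  fun x y => m (m x w) y.

Definition alg_iso (A B : V -> V -> V) (phi : 'End(V)) : Prop :=
  bijective phi /\ forall x y, phi (A x y) = B (phi x) (phi y).

Definition alg_isomorphic (A B : V -> V -> V) : Prop :=
  exists phi : 'End(V), alg_iso A B phi.

End Defs.

(* Main.v *)
Require Import Defs.
From HB Require Import structures.
From mathcomp Require Import all_boot all_order all_algebra.
Import GRing.Theory.
Local Open Scope ring_scope.

Lemma end_of_lin (F : fieldType) (V : vectType F) (h : V -> V) :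
  linear h -> exists phi : 'End(V), forall x, phi x = h x.
Proof.
move=> Hh.
pose hl : {linear V -> V} := HB.pack h (GRing.isLinear.Build F V V *:%R h Hh).
by exists (linfun hl) => x; rewrite lfunE.
Qed.

Lemma lcA (T : Type) (m : T -> T -> T) :
  (forall x y, m x y = m y x) -> (forall x y z, m (m x y) z = m x (m y z)) ->
  forall a b c, m a (m b c) = m b (m a c).
Proof. by move=> Hc Ha a b c; rewrite -Ha (Hc a b) Ha. Qed.

Theorem lemma1p9 (F : fieldType) (V : vectType F) (m : V -> V -> V)
  (f g : 'End(V)) :
  is_bilinear m -> unital m -> commutative_alg m -> associative_alg m ->
  bijective f -> bijective g ->
  [/\ (unital (homotope m f g) <->
         exists w, invertible_elt m w /\
           forall x y, homotope m f g x y = isotope m w x y),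
      ((exists w, invertible_elt m w /\
           forall x y, homotope m f g x y = isotope m w x y) <->
         alg_isomorphic (homotope m f g) m)
    & (unital (homotope m f g) ->
       exists w, invertible_elt m w /\
         (forall x y, homotope m f g x y = isotope m w x y) /\
         (forall w2, invertible_elt m w2 ->
            (forall x y, homotope m f g x y = isotope m w2 x y) -> w2 = w) /\
         (forall e w', is_unit_elt m e -> m w w' = e ->
            is_unit_elt (homotope m f g) w') /\
         (exists u v, [/\ w = m u v, forall x, f x = m u x & forall x, g x = m v x]) /\
         (forall phi : 'End(V), alg_iso (homotope m f g) m phi <->
            exists sigma : 'End(V), alg_iso m m sigma /\
              forall x, phi x = sigma (m w x)))].
Proof.
move=> [Hl _] [e He] Hc Ha _ _.
have lc := @lcA _ m Hc Ha.
have eL x : m e x = x by case: (He x).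
have eR x : m x e = x by case: (He x).
set h := homotope m f g.
have A : unital h -> exists w, [/\ invertible_elt m w,
    forall x y, h x y = isotope m w x y &
    exists u v, [/\ w = m u v, forall x, f x = m u x & forall x, g x = m v x]].
  move=> [e' He'].
  have H1 x : m (f e') (g x) = x by case: (He' x).
  have H2 x : m (f x) (g e') = x by case: (He' x).
  set a := f e' in H1; set c := g e' in H2.
  have av : m a (g e) = e by rewrite H1.
  have uc : m (f e) c = e by rewrite H2.
  have gE x : g x = m (g e) x.
    by rewrite -{2}(H1 x) -Ha (Hc (g e) a) av eL.
  have fE x : f x = m (f e) x.
    by rewrite -{2}(H2 x) (Hc (f x) c) -Ha uc eL.
  exists (m (f e) (g e)); split.
  - exists e, (m c a); split => //.
      by rewrite Ha (lc (g e) c a) (Hc (g e) a) av eR uc.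
    by rewrite Hc Ha (lc (g e) c a) (Hc (g e) a) av eR uc.
  - move=> x y; rewrite /h /homotope /isotope fE gE.
    by rewrite !Ha lc.
  - by exists (f e), (g e).
have D : forall w, (forall x y, h x y = isotope m w x y) ->
    forall e0 w', is_unit_elt m e0 -> m w w' = e0 -> is_unit_elt h w'.
  move=> w Hw e0 w' He0 Hww x; rewrite !Hw /isotope; split.
    by rewrite (Hc w' w) Hww; case: (He0 x).
  by rewrite Ha Hww; case: (He0 x).
have invK : forall w, invertible_elt m w -> exists w',
    (forall x, m w' (m w x) = x) /\ (forall x, m w (m w' x) = x).
  move=> w [e0 [w' [He0 H1 H2]]]; exists w'; split => x.
    by rewrite -Ha H2; case: (He0 x).
  by rewrite -Ha H1; case: (He0 x).
have B : alg_isomorphic h m -> unital h.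
  move=> [phi [[pi Hp1 Hp2] Hphi]]; exists (pi e) => x.
  have pinj := can_inj Hp1.
  by split; apply: pinj; rewrite Hphi Hp2 ?eL ?eR.
have C : forall w, invertible_elt m w ->
    (forall x y, h x y = isotope m w x y) -> alg_isomorphic h m.
  move=> w Hinv Hw; have [w' [K1 K2]] := invK w Hinv.
  have [phi Hphi] := @end_of_lin _ _ _ (Hl w).
  exists phi; split.
    by exists (m w') => x; rewrite Hphi ?K1 ?K2.
  by move=> x y; rewrite !Hphi Hw /isotope !Ha.
split.
- split; first by move=> /A [w [? ? _]]; exists w.
  move=> [w [[e0 [w' [He0 H1 H2]]] Hw]]; exists w'.
  exact: (D w Hw e0 w' He0 H1).
- split; first by move=> [w [Hi Hw]]; exact: (C w Hi Hw).
  by move=> /B /A [w [? ? _]]; exists w.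
move=> /A [w [Hinv Hw Huv]]; exists w; split => //; split => //.
split.
  move=> w2 _ Hw2; have := Hw e e; rewrite Hw2 /isotope.
  by rewrite !eL !eR => ->.
split; first exact: (D w Hw).
split => //.
have [w' [K1 K2]] := invK w Hinv.
move=> phi; split.
  move=> [[pi Hp1 Hp2] Hphi].
  have [Lw' HL] := @end_of_lin _ _ _ (Hl w').
  exists (phi \o Lw')%VF; split; last by move=> x; rewrite comp_lfunE HL K1.
  split.
    by exists (fun x => m w (pi x)) => x; rewrite comp_lfunE HL ?K1 ?Hp1 ?Hp2 ?K2.
  move=> x y; rewrite !comp_lfunE !HL -Hphi Hw /isotope.
  congr (phi _).
  by rewrite (Hc (m w' x) w) -Ha K2 lc.
move=> [sigma [[[si Hs1 Hs2] Hsig] Hphi]]; rewrite /alg_iso; split.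
  exists (fun x => m w' (si x)) => x; rewrite ?Hphi.
    by rewrite Hs1 K1.
  by rewrite K2 Hs2.
by move=> x y; rewrite !Hphi Hw /isotope -Hsig !Ha.
Qed.
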